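(* For $N\ge2$ let $x_{N,k}=k/N$ and $\lambda_{N,k}=\frac{1}{2(N-1)}$ for $k=1,\dots,N-1$, and $x_{N,N}=2$, $\lambda_{N,N}=\frac12$. Let $V_{N,1},\dots,V_{N,N}$ solve the deterministic system $$\frac{d}{dt}V_{N,k}(t)=\sum_{j\neq k}\frac{2(\lambda_{N,k}+\lambda_{N,j})}{V_{N,k}(t)-V_{N,j}(t)},\qquad V_{N,k}(0)=x_{N,k},$$ and let $\alpha_{N,t}=\sum_{k=1}^N\lambda_{N,k}\delta_{V_{N,k}(t)}$. Then for every $T>0$ the sequence $\{\alpha_{N,\cdot}\}_N$ is not tight in $\mathcal M(T)$.
   Context: $\mathcal M(T)=C([0,T],\mathcal P(\mathbb R))$ with the topology of uniform convergence, where $\mathcal P(\mathbb R)$ is the space of probability measures on $\mathbb R$ with the topology of weak convergence (Lévy–Prokhorov metric). A sequence in $\mathcal M(T)$ is tight if it has a subsequence converging in distribution (for deterministic elements: a convergent subsequence). *)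

(* Defs.v *)
From HB Require Import structures.
From mathcomp Require Import all_boot all_order all_algebra.
From mathcomp Require Import all_classical all_reals all_analysis.
Set Implicit Arguments. Unset Strict Implicit. Unset Printing Implicit Defensive.
Import Order.TTheory GRing.Theory Num.Theory.
Import numFieldNormedType.Exports.
Local Open Scope classical_set_scope.
Local Open Scope ring_scope.

Definition eps_nbhd (R : realType) (A : set R) (e : R) : set R :=
  [set x | exists2 a, A a & `|x - a| < e].

Definition levy_prokhorov (R : realType) (mu nu : set R -> \bar R) : R :=
  inf [set e : R | 0 < e /\
        forall A : set R, measurable A ->
          (mu A <= nu (eps_nbhd A e) + e%:E)%E /\
          (nu A <= mu (eps_nbhd A e) + e%:E)%E].

Definition lam (R : realType) (N k : nat) : R :=
  if (k < N)%N then (2 * (N%:R - 1))^-1 else 2^-1.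

Definition x0 (R : realType) (N k : nat) : R :=
  if (k < N)%N then k%:R / N%:R else 2.

Definition alpha (R : realType) (V : nat -> nat -> R -> R) (N : nat) (t : R)
  : set R -> \bar R :=
  fun A => (\sum_(1 <= k < N.+1) (lam R N k)%:E * \d_(V N k t) A)%E.

Definition solves_system (R : realType) (T : R) (V : nat -> nat -> R -> R)
  (N : nat) : Prop :=
  (forall k, (1 <= k <= N)%N -> V N k 0 = x0 R N k) /\
  (forall k, (1 <= k <= N)%N -> {within `[0, T], continuous (V N k)}) /\
  (forall j k t, (1 <= j <= N)%N -> (1 <= k <= N)%N -> j != k ->
       0 <= t <= T -> V N j t != V N k t) /\
  (forall k t, (1 <= k <= N)%N -> 0 < t < T ->
     is_derive t 1 (V N k)
       (\sum_(1 <= j < N.+1 | j != k)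
          (2 * (lam R N k + lam R N j)) / (V N k t - V N j t))).

(* Continuity of a path of probability measures on [0,T] for the
   Levy--Prokhorov metric, i.e. membership in M(T). *)
Definition LP_continuous_on (R : realType) (T : R)
  (mu : R -> probability R R) : Prop :=
  forall t, 0 <= t <= T -> forall e : R, 0 < e -> exists2 d : R, 0 < d &
    forall s, 0 <= s <= T -> `|s - t| < d ->
      levy_prokhorov (mu s) (mu t) < e.

(* A (deterministic) sequence (indexed by N >= 2) of paths is tight in M(T):
   it has a subsequence converging uniformly on [0,T] in the
   Levy--Prokhorov metric to some element of M(T). *)
Definition tight_MT (R : realType) (T : R)
  (a : nat -> R -> set R -> \bar R) : Prop :=
  exists phi : nat -> nat, (2 <= phi 0)%N /\ (forall n, (phi n < phi n.+1)%N) /\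
  exists mu : R -> probability R R, LP_continuous_on T mu /\
    forall e : R, 0 < e -> exists n0, forall n, (n0 <= n)%N ->
      forall t, 0 <= t <= T -> levy_prokhorov (a (phi n) t) (mu t) < e.

(* Main.v *)
Require Import Defs.
From HB Require Import structures.
From mathcomp Require Import all_boot all_order all_algebra.
From mathcomp Require Import all_classical all_reals all_analysis.
From mathcomp Require Import ring lra.
Import Order.TTheory GRing.Theory Num.Theory.
Import numFieldNormedType.Exports.
Local Open Scope classical_set_scope.
Local Open Scope ring_scope.

Section S.
Variable R : realType.
Lemma antisym_sum (F : nat -> nat -> R) (m n : nat) :
  (forall k j, F k j = - F j k) -> \sum_(m <= k < n) \sum_(m <= j < n) F k j = 0.
Proof.
move=> H.
set D := \sum_(m <= k < n) _.
have : D = - D.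
  transitivity (\sum_(m <= j < n) \sum_(m <= k < n) F k j).
    exact: exchange_big.
  rewrite /D -sumrN; apply: eq_bigr => j _.
  rewrite -sumrN; apply: eq_bigr => k _; exact: H.
lra.
Qed.

Lemma tangent (a M : R) : 0 < a -> 2 * M - a * M ^+ 2 <= a^-1.
Proof.
move=> a0.
have h : a * a^-1 = 1 by rewrite mulfV // gt_eqF.
rewrite -subr_ge0.
have -> : a^-1 - (2 * M - a * M ^+ 2) = a^-1 * (1 - a * M) ^+ 2.
  by field; rewrite gt_eqF.
by rewrite mulr_ge0 ?sqr_ge0 // invr_ge0 ltW.
Qed.

Lemma amhm (a : nat -> R) (m n : nat) : (m < n)%N ->
  (forall k, (m <= k < n)%N -> 0 < a k) ->
  ((n - m)%:R) ^+ 2 <= (\sum_(m <= k < n) a k) * (\sum_(m <= k < n) (a k)^-1).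
Proof.
move=> mn apos.
set U := \sum_(m <= k < n) a k.
have U0 : 0 < U.
  rewrite /U (big_ltn mn); apply: ltr_pwDl.
    by apply: apos; rewrite leqnn mn.
  rewrite big_nat sumr_ge0 // => k /andP[a1 a2]; apply/ltW/apos.
  by rewrite a2 andbT ltnW.
set c := (n - m)%:R : R.
have c0 : 0 < c by rewrite ltr0n subn_gt0.
set M := c / U.
have : \sum_(m <= k < n) (2 * M - a k * M ^+ 2) <= \sum_(m <= k < n) (a k)^-1.
  rewrite !big_nat; apply: ler_sum => k /andP[? ?]; apply: tangent; apply: apos.
  by apply/andP.
rewrite sumrB sumr_const_nat.
move=> h.
have e : (2 * M) *+ (n - m) - \sum_(m <= i < n) a i * M ^+ 2 = c ^+ 2 / U.
  rewrite -mulr_suml -/U -mulr_natr -/c /M; field; exact: lt0r_neq0.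
rewrite e in h.
by rewrite -(ler_pdivrMl _ _ U0) mulrC.
Qed.
Lemma is_derive_sumn (f : nat -> R -> R) (df : nat -> R) (x : R) (m n : nat) :
  (forall k, (m <= k < n)%N -> is_derive x 1 (f k) (df k)) ->
  is_derive x 1 (fun t => \sum_(m <= k < n) f k t) (\sum_(m <= k < n) df k).
Proof.
elim: n => [|n IH] H.
  have -> : (fun t => \sum_(m <= k < 0) f k t) = cst 0.
    by apply/funext => t; rewrite big_geq.
  by rewrite big_geq //; apply: is_derive_cst.
case: (leqP m n) => mn.
  have -> : (fun t => \sum_(m <= k < n.+1) f k t) = (fun t => \sum_(m <= k < n) f k t) + f n.
    by apply/funext => t; rewrite big_nat_recr.
  rewrite big_nat_recr //=; apply: is_deriveD.
    by apply: IH => k /andP[a b]; apply: H; rewrite a ltnS ltnW.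
  by apply: H; rewrite mn ltnSn.
have -> : (fun t => \sum_(m <= k < n.+1) f k t) = cst 0.
  by apply/funext => t; rewrite big_geq.
by rewrite big_geq //; apply: is_derive_cst.
Qed.

Lemma cont_sumn (A : set R) (f : nat -> R -> R) (m n : nat) :
  (forall k, (m <= k < n)%N -> {within A, continuous (f k)}) ->
  {within A, continuous (fun t => \sum_(m <= k < n) f k t)}.
Proof.
elim: n => [|n IH] H.
  have -> : (fun t => \sum_(m <= k < 0) f k t) = cst 0.
    by apply/funext => t; rewrite big_geq.
  by move=> x; apply: cst_continuous.
case: (leqP m n) => mn.
  have -> : (fun t => \sum_(m <= k < n.+1) f k t) = (fun t => \sum_(m <= k < n) f k t) + f n.
    by apply/funext => t; rewrite big_nat_recr.
  move=> x; apply: continuousD.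
    by apply: IH => // k /andP[a b]; apply: H; rewrite a ltnS ltnW.
  by apply: H; rewrite mn ltnSn.
have -> : (fun t => \sum_(m <= k < n.+1) f k t) = cst 0.
  by apply/funext => t; rewrite big_geq.
by move=> x; apply: cst_continuous.
Qed.
End S.

Lemma key (R : realType) (T : R) (V : nat -> nat -> R -> R) (N : nat) :
  0 < T -> (2 <= N)%N -> solves_system T V N ->
  0 < V N N (T/2) /\ N%:R * T / 4 <= V N N (T/2) ^+ 2.
Proof.
move=> T0 N2 [h0 [hc [hd hder]]].
set W := V N N.
have N1 : (1 <= N)%N by apply: leq_trans N2.
have hNk : (1 <= N <= N)%N by rewrite leqnn andbT.
have ord : forall j t, (1 <= j < N)%N -> 0 <= t <= T -> V N j t < W t.
  move=> j t /andP[j1 jN] /andP[t0 tT].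
  rewrite ltNge; apply/negP => Hle.
  have hj : (1 <= j <= N)%N by rewrite j1 ltnW.
  pose f := fun s => W s - V N j s.
  have fc : {within `[0, t], continuous f}.
    apply: (@continuous_subspaceW _ _ `[0, t] `[0, T]).
      move=> x; rewrite /= !in_itv /= => /andP[a b]; by rewrite a (le_trans b tT).
    move=> x; apply: continuousB; [exact: hc | exact: hc].
  have f0 : 0 < f 0.
    rewrite /f /W h0 // h0 // /x0 ltnn jN subr_gt0.
    rewrite ltr_pdivrMr ?ltr0n // -natrM ltr_nat (leq_trans jN) //.
    by rewrite leq_pmull.
  have ft : f t <= 0 by rewrite /f subr_le0.
  have [c cin fc0] : exists2 c, c \in `[0, t] & f c = 0.
    apply: IVT => //.
    by rewrite ge_min le_max ft (ltW f0) orbT.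
  move: cin; rewrite in_itv /= => /andP[c0 ct].
  have := hd j N c hj hNk; rewrite (ltn_eqF jN) => /(_ isT).
  rewrite c0 (le_trans ct tT) => /(_ isT).
  have : W c == V N j c by rewrite -subr_eq0; apply/eqP.
  by rewrite eq_sym /W => ->.
have Dzero : forall t, \sum_(1 <= k < N.+1) \sum_(1 <= j < N.+1 | j != k)
    (2 * (lam R N k + lam R N j)) / (V N k t - V N j t) = 0.
  move=> t.
  rewrite -[RHS](@antisym_sum R (fun k j => (2 * (lam R N k + lam R N j)) / (V N k t - V N j t)) 1 N.+1).
    apply: eq_bigr => k _; rewrite big_mkcond; apply: eq_bigr => j _.
    by case: eqP => [->|//]; rewrite subrr invr0 mulr0.
  by move=> k j; rewrite (addrC (lam R N j)) -opprB invrN mulrN.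
pose S := fun t => \sum_(1 <= k < N.+1) V N k t.
have Sconst : forall s, 0 <= s <= T -> S s = S 0.
  move=> s /andP[s0 sT].
  have H1 : forall x, x \in `]0, s[ -> is_derive x 1 S ((fun _ => 0) x).
    move=> x; rewrite in_itv /= => /andP[x0 xs].
    have := @is_derive_sumn R (V N) (fun k => \sum_(1 <= j < N.+1 | j != k)
      (2 * (lam R N k + lam R N j)) / (V N k x - V N j x)) x 1 N.+1.
    rewrite (Dzero x) => H; apply: H => k /andP[k1 kN].
    by apply: hder; [rewrite k1 -ltnS | rewrite x0 (lt_le_trans xs sT)].
  have H2 : {within `[0, s], continuous S}.
    apply: (@continuous_subspaceW _ _ `[0, s] `[0, T]).
      move=> x; rewrite /= !in_itv /= => /andP[a b]; by rewrite a (le_trans b sT).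
    by apply: cont_sumn => k /andP[k1 kN]; apply: hc; rewrite k1 -ltnS.
  have [c _] := @MVT_segment R S (fun _ => 0) 0 s s0 H1 H2.
  by rewrite mul0r => /eqP; rewrite subr_eq0 => /eqP.
have S0ge : 0 <= S 0.
  rewrite /S big_nat sumr_ge0 // => k /andP[k1 kN].
  rewrite h0; last by rewrite k1 -ltnS.
  rewrite /x0; case: ifP => _.
    by rewrite divr_ge0 ?ler0n.
  lra.
have Ueq : forall t, 0 <= t <= T ->
    \sum_(1 <= j < N) (W t - V N j t) = N%:R * W t - S 0.
  move=> t tT; rewrite -(Sconst t tT) /S big_nat_recr //= sumrB sumr_const_nat.
  rewrite -/W -[W t *+ _]mulr_natl natrB //; lra.
have Wder : forall t, 0 < t < T -> is_derive t 1 W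
    (\sum_(1 <= j < N.+1 | j != N) (2 * (lam R N N + lam R N j)) / (W t - V N j t)).
  by move=> t tT; apply: hder.
have Wderge : forall t, 0 <= t <= T ->
    \sum_(1 <= j < N) (W t - V N j t)^-1 <=
    \sum_(1 <= j < N.+1 | j != N) (2 * (lam R N N + lam R N j)) / (W t - V N j t).
  move=> t tT.
  rewrite [X in _ <= X]big_mkcond big_nat_recr //= eqxx addr0 !big_nat; apply: ler_sum => j /andP[j1 jN].
  rewrite (ltn_eqF jN) mulrC ler_peMr //.
    by rewrite invr_ge0 subr_ge0 ltW // ord // j1.
  rewrite /lam ltnn jN mulrDr divff ?pnatr_eq0 // lerDl divr_ge0 // mulr_ge0 //.
  by rewrite subr_ge0 ler1n.
pose K : R := 2 * N%:R * (N%:R - 1) ^+ 2.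
pose f : R -> R := N%:R \*: W - cst (S 0).
pose d := fun x => N%:R *: (\sum_(1 <= j < N.+1 | j != N) (2 * (lam R N N + lam R N j)) / (W x - V N j x)) - 0.
pose G : R -> R := f * f - K \*: id.
pose dG := fun x => (f x *: d x + f x *: d x) - K *: 1.
have T2 : 0 < T / 2 by rewrite divr_gt0.
have T2T : T / 2 < T by lra.
have dGx : forall x, x \in `]0, T / 2[ -> is_derive x 1 G (dG x).
  move=> x; rewrite in_itv /= => /andP[x0 xT].
  have hx : 0 < x < T by rewrite x0 (lt_trans xT T2T).
  have du : is_derive x 1 f (d x).
    apply: is_deriveB; apply: is_deriveZ; exact: Wder.
  apply: is_deriveB; try exact: is_deriveM.
  all: try (apply: is_deriveZ; exact: is_derive_id).
have hW : {within `[0, T / 2], continuous W}.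
  apply: (@continuous_subspaceW _ _ `[0, T / 2] `[0, T]); last exact: hc.
  by move=> x; rewrite /= !in_itv /= => /andP[a b]; rewrite a (le_trans b (ltW T2T)).
have fE : f = (cst N%:R \* W) - cst (S 0) by apply/funext => s.
have fc : {within `[0, T / 2], continuous f}.
  rewrite fE => x; apply: continuousB; last exact: cst_continuous.
  apply: continuousM; [exact: cst_continuous | exact: hW].
have Gc : {within `[0, T / 2], continuous G}.
  move=> y; apply: continuousB; first by apply: continuousM; exact: fc.
  have -> : K \*: id = (cst K \* id) by apply/funext => s.
  apply: continuousM; first exact: cst_continuous.
  by apply: (@continuous_subspaceT _ _ `[0, T / 2] id) => z; exact: cvg_id.
have fv : forall s, f s = N%:R * W s - S 0 by [].
have Gv : forall s, G s = f s * f s - K * s by [].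
have [c cin hMVT] := MVT T2 dGx Gc.
move: cin; rewrite in_itv /= => /andP[c0 cT2].
have cT : 0 <= c <= T by rewrite ltW // ltW // (lt_trans cT2 T2T).
have N1r : 2 <= N%:R :> R by rewrite ler_nat.
have hdG : 0 <= dG c.
  have := Ueq c cT; rewrite -fv => UE.
  have apos : forall j, (1 <= j < N)%N -> 0 < W c - V N j c.
    by move=> j hj; rewrite subr_gt0; apply: ord.
  have := @amhm R (fun j => W c - V N j c) 1 N N2 apos.
  rewrite UE natrB // => AM.
  have := Wderge c cT.
  set H := \sum_(1 <= j < N) _.
  set Wp := \sum_(_ <= j < _ | _) _ => HW.
  have fc0 : 0 <= f c by rewrite -UE big_nat sumr_ge0 // => j /apos /ltW.
  have e1 : f c * H <= f c * Wp by rewrite ler_wpM2l.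
  have dGe : dG c = 2 * N%:R * (f c * Wp) - K.
    have sc : forall a b : R, a *: b = a * b by [].
    rewrite /dG /d /= -/Wp !sc subr0 mulr1; lra.
  rewrite dGe.
  have e2 : N%:R * (f c * H) <= N%:R * (f c * Wp) by rewrite ler_wpM2l.
  have e3 : N%:R * (N%:R - 1) ^+ 2 <= N%:R * (f c * H) by rewrite ler_wpM2l.
  rewrite /K; lra.
have hT2 : 0 <= T / 2 <= T by rewrite (ltW T2) (ltW T2T).
have fT0 : 0 <= f (T / 2).
  rewrite fv -Ueq // big_nat sumr_ge0 // => j hj.
  by rewrite subr_ge0 ltW // ord.
have key : K * (T / 2) <= f (T / 2) ^+ 2.
  move: hMVT; rewrite !Gv subr0 mulr0 subr0 => hM.
  have : 0 <= dG c * (T / 2) by rewrite mulr_ge0 // ltW.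
  have : 0 <= f 0 * f 0 by rewrite -expr2 sqr_ge0.
  rewrite expr2; lra.
have NW : f (T / 2) <= N%:R * W (T / 2) by rewrite fv; lra.
have K0 : 0 < K by rewrite /K mulr_gt0 ?exprn_gt0 //; lra.
set w := W (T / 2) in NW *.
set F := f (T / 2) in fT0 key NW *.
have KT : 0 < K * (T / 2) by rewrite mulr_gt0.
have w0 : 0 < w.
  rewrite ltNge; apply/negP => hw.
  have : N%:R * w <= 0 by rewrite mulr_ge0_le0 // ler0n.
  move=> h; have F0 : F = 0 by lra.
  by move: key; rewrite F0 expr0n /=; lra.
split => //.
have h1 : K * (T / 2) <= (N%:R * w) ^+ 2.
  apply: (le_trans key); rewrite !expr2; nra.
rewrite /K in h1.
set n := N%:R : R in h1 N1r *.
have h2 : n ^+ 2 / 4 <= (n - 1) ^+ 2 by rewrite !expr2; nra.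
have n0 : 0 < n by lra.
have h3 : (n - 1) ^+ 2 * T <= n * w ^+ 2.
  rewrite -(ler_pM2l n0).
  have -> : n * ((n - 1) ^+ 2 * T) = 2 * n * (n - 1) ^+ 2 * (T / 2) by field.
  have -> : n * (n * w ^+ 2) = (n * w) ^+ 2 by rewrite exprMn expr2 mulrA.
  exact: h1.
have h4 : n ^+ 2 / 4 * T <= (n - 1) ^+ 2 * T by rewrite ler_wpM2r // ltW.
rewrite -(ler_pM2l n0).
have -> : n * (n * T / 4) = n ^+ 2 / 4 * T by rewrite expr2; field.
exact: le_trans h4 h3.
Qed.

Lemma prob_fine (R : realType) (P : probability R R) (A : set R) :
  measurable A -> P A = (fine (P A))%:E.
Proof.
move=> mA; rewrite fineK // ge0_fin_numE ?measure_ge0 //.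
exact: (le_lt_trans (probability_le1 P mA) (ltry _)).
Qed.

Lemma ball_meas (R : realType) (x r : R) : measurable [set y : R | `|y - x| < r].
Proof.
have -> : [set y : R | `|y - x| < r] = [set` `]x - r, x + r[].
  apply/seteqP; split => y /=; rewrite in_itv /=.
    by rewrite distrC ltr_distlC.
  by rewrite distrC ltr_distlC.
exact: measurable_itv.
Qed.

Lemma lam_ge0 (R : realType) N k : (2 <= N)%N -> 0 <= lam R N k.
Proof.
move=> N2; rewrite /lam; case: ifP => _; last by rewrite invr_ge0.
rewrite invr_ge0 mulr_ge0 // subr_ge0 ler1n; exact: leq_trans N2.
Qed.

Lemma lam_le1 (R : realType) N k : (2 <= N)%N -> lam R N k <= 1.
Proof.
move=> N2; rewrite /lam; case: ifP => _; last by rewrite invf_le1 //; lra.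
have h : 2 <= N%:R :> R by rewrite ler_nat.
rewrite invf_le1; lra.
Qed.

Lemma alpha_ge0 (R : realType) (V : nat -> nat -> R -> R) (N : nat) (t : R) (A : set R) : (2 <= N)%N -> (0 <= alpha V N t A)%E.
Proof.
move=> N2; rewrite /alpha; apply: sume_ge0 => k _.
by rewrite diracE -EFinM lee_fin mulr_ge0 ?lam_ge0.
Qed.

Lemma alpha_leN (R : realType) (V : nat -> nat -> R -> R) (N : nat) (t : R) (A : set R) : (2 <= N)%N -> (alpha V N t A <= (N%:R : R)%:E)%E.
Proof.
move=> N2; rewrite /alpha.
apply: (@le_trans _ _ (\sum_(1 <= k < N.+1) (1 : R)%:E)%E).
  apply: lee_sum => k _; rewrite diracE -EFinM lee_fin.
  case: (V N k t \in A); rewrite ?mulr1 ?mulr0 ?lam_le1 //.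
rewrite sumEFin lee_fin sumr_const_nat subn1 /=.
by rewrite -mulr_natr mul1r.
Qed.

Lemma alpha_ge_half (R : realType) (V : nat -> nat -> R -> R) (N : nat) (t : R) : (2 <= N)%N ->
  ((2^-1 : R)%:E <= alpha V N t [set V N N t])%E.
Proof.
move=> N2; rewrite /alpha big_nat_recr /=; last exact: leq_trans N2.
apply: (@le_trans _ _ ((lam R N N)%:E * \d_(V N N t) [set V N N t])%E).
  rewrite diracE (_ : (V N N t \in [set V N N t]) = true); last by apply/mem_set.
  by rewrite -EFinM mulr1 /lam ltnn.
apply: leeDr; apply: sume_ge0 => k _.
by rewrite diracE -EFinM lee_fin mulr_ge0 ?lam_ge0.
Qed.

Lemma lp_ball (R : realType) (V : nat -> nat -> R -> R) (N : nat) (t : R)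
  (mu : probability R R) : (2 <= N)%N ->
  levy_prokhorov (alpha V N t) mu < 8^-1 ->
  exists r : R, [/\ 0 < r, r < 8^-1 &
     3 / 8 <= fine (mu [set y | `|y - V N N t| < r])].
Proof.
move=> N2; rewrite /levy_prokhorov; set Sset := [set e | _] => H.
have hN : 2 <= N%:R :> R by rewrite ler_nat.
have ne : Sset !=set0.
  exists (N%:R + 1); split; first lra.
  move=> A mA; split.
    apply: (le_trans (alpha_leN _ V N t A N2)).
    apply: (le_trans _ (leeDr _ (measure_ge0 _ _))); rewrite lee_fin; lra.
  apply: (le_trans (probability_le1 mu mA)).
  apply: (le_trans _ (leeDr _ (alpha_ge0 _ V N t _ N2))); rewrite lee_fin; lra.
have [e' [e0 He] elt] := inf_lt ne H.
have [H1 _] := He [set V N N t] (measurable_set1 _).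
have eq : eps_nbhd [set V N N t] e' = [set y | `|y - V N N t| < e'].
  apply/seteqP; split => y /=.
    by move=> [a -> h].
  by move=> h; exists (V N N t).
rewrite eq (prob_fine _ mu _ (ball_meas _ _ _)) -EFinD in H1.
have H2 := le_trans (alpha_ge_half _ V N t N2) H1.
rewrite lee_fin in H2.
exists e'; split => //; lra.
Qed.

Lemma three_balls (R : realType) (P : probability R R) (B1 B2 B3 : set R) :
  measurable B1 -> measurable B2 -> measurable B3 ->
  B1 `&` B2 = set0 -> (B1 `|` B2) `&` B3 = set0 ->
  fine (P B1) + fine (P B2) + fine (P B3) <= 1.
Proof.
move=> mB1 mB2 mB3 d12 d3.
have hU := measureU P (measurableU _ _ mB1 mB2) mB3 d3.
rewrite (measureU P mB1 mB2 d12) in hU.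
have hle := probability_le1 P (measurableU _ _ (measurableU _ _ mB1 mB2) mB3).
rewrite hU in hle.
have h : ((fine (P B1) + fine (P B2) + fine (P B3))%:E = P B1 + P B2 + P B3)%E.
  by rewrite !EFinD -(prob_fine _ P _ mB1) -(prob_fine _ P _ mB2) -(prob_fine _ P _ mB3).
have : ((fine (P B1) + fine (P B2) + fine (P B3))%:E <= 1)%E by rewrite h; exact: hle.
by rewrite lee_fin.
Qed.

Theorem mainTheorem4 (R : realType) (T : R) (V : nat -> nat -> R -> R) :
  0 < T ->
  (forall N, (2 <= N)%N -> solves_system T V N) ->
  ~ tight_MT T (alpha V).
Proof.
move=> T0 hs [phi [phi0 [phiinc [mu [_ hconv]]]]].
have phige : forall n, (n + 2 <= phi n)%N.
  elim=> [//|n IH]; rewrite addSn; exact: leq_ltn_trans IH (phiinc n).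
have phi2 : forall n, (2 <= phi n)%N by move=> n; apply: leq_trans (phige n); rewrite leq_addl.
have [n0 Hn0] := hconv 8^-1 (ltac:(by rewrite invr_gt0)).
pose w := fun n => V (phi n) (phi n) (T / 2).
have tT : 0 <= T / 2 <= T by apply/andP; split; lra.
have kn : forall n, 0 < w n /\ (phi n)%:R * T / 4 <= w n ^+ 2.
  by move=> n; apply: key => //; apply: hs.
have ball : forall n, (n0 <= n)%N -> exists r, [/\ 0 < r, r < 8^-1 &
     3 / 8 <= fine (mu (T / 2) [set y | `|y - w n| < r])].
  by move=> n hn; apply: lp_ball => //; apply: Hn0.
have far : forall (x : R) (m : nat), exists n, (m <= n)%N /\ x + 1 < w n.
  move=> x m.
  have q0 : 0 <= (x + 1) ^+ 2 * 4 / T 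
    by apply: divr_ge0; [apply: mulr_ge0; [exact: sqr_ge0 | lra] | exact: ltW].
  pose M := Num.Def.archi_bound ((x + 1) ^+ 2 * 4 / T).
  have hM := archi_boundP q0.
  exists (maxn m M); split; first exact: leq_maxl.
  have [w0 hw] := kn (maxn m M).
  have h1 : (M%:R : R) <= (phi (maxn m M))%:R.
    rewrite ler_nat; apply: leq_trans (phige _); apply: leq_trans (leq_addr 2 _).
    exact: leq_maxr.
  have h2 : (x + 1) ^+ 2 < w (maxn m M) ^+ 2.
    apply: (lt_le_trans _ hw).
    rewrite -(ltr_pM2r (_ : 0 < 4 / T)); last by rewrite divr_gt0.
    have -> : (phi (maxn m M))%:R * T / 4 * (4 / T) = (phi (maxn m M))%:R by field; lra.
    by apply: (lt_le_trans _ h1); move: hM; rewrite mulrA.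
  rewrite ltNge; apply/negP => hle.
  have : w (maxn m M) ^+ 2 <= (x + 1) ^+ 2.
    rewrite !expr2; apply: ler_pM => //; lra.
  lra.
case: (far (w n0) n0) => n2 [h2 f2].
case: (far (w n2) n0) => n3 [h3 f3].
have [r1 [r10 r1l m1]] := ball n0 (leqnn _).
have [r2 [r20 r2l m2]] := ball n2 h2.
have [r3 [r30 r3l m3]] := ball n3 h3.
set B1 := [set y | `|y - w n0| < r1] in m1.
set B2 := [set y | `|y - w n2| < r2] in m2.
set B3 := [set y | `|y - w n3| < r3] in m3.
have mB1 : measurable B1 by apply: ball_meas.
have mB2 : measurable B2 by apply: ball_meas.
have mB3 : measurable B3 by apply: ball_meas.
have inB : forall (y c r : R), `|y - c| < r -> r < 8^-1 -> c - 8^-1 < y < c + 8^-1.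
  move=> y c r; rewrite distrC ltr_distlC => /andP[a b] rl; apply/andP; split; lra.
have d12 : B1 `&` B2 = set0.
  apply/seteqP; split => y //= [/inB/(_ r1l) /andP[a b] /inB/(_ r2l) /andP[c d]]; lra.
have d3 : (B1 `|` B2) `&` B3 = set0.
  apply/seteqP; split => y //= [[/inB/(_ r1l) /andP[a b]|/inB/(_ r2l) /andP[a b]]
    /inB/(_ r3l) /andP[c d]]; lra.
have := three_balls _ (mu (T / 2)) _ _ _ mB1 mB2 mB3 d12 d3.
lra.
Qed.
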